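(* Let $\phi$ be a circuit all of whose constraints $F_v$ are even-windable. Then the signature $[\![\phi]\!]$ is even-windable.
   Context: For $x,y\in\{0,1\}^J$, $x\oplus y$ is coordinatewise addition mod 2, and $\mathbf S$ is the characteristic vector of $S\subseteq J$. For $z\in\{0,1\}^J$, $\mathrm{Match}(z)$ is the set of partitions of $\{i:z_i=1\}$ into pairs. $F:\{0,1\}^J\to\mathbb{Q}_{\ge0}$ is even-windable if there exist $B(x,y,M)\ge0$ for all $x,y\in\{0,1\}^J$, $M\in\mathrm{Match}(x\oplus y)$, with (EW1) $F(x)F(y)=\sum_{M\in\mathrm{Match}(x\oplus y)}B(x,y,M)$ for all $x,y$, and (EW2) $B(x,y,M)=B(x\oplus\mathbf S,y\oplus\mathbf S,M)$ for all $x,y$ and all $S\in M\in\mathrm{Match}(x\oplus y)$. A circuit $\phi$ consists of: a finite set $J$ of incidences; a finite set $V$ of vertices with sets $J_v$ partitioning $J$; a set $A\subseteq J$ of external edges; a partition $E$ of $J\setminus A$ into pairs (internal edges); and constraints $F_v:\{0,1\}^{J_v}\to\mathbb{Q}_{\ge0}$. An assignment is $x\in\{0,1\}^J$ with $x_i=x_j$ for all $\{i,j\}\in E$; $\mathrm{wt}_\phi(x)=\prod_vF_v(x|_{J_v})$; the signature is $[\![\phi]\!]:\{0,1\}^A\to\mathbb{Q}_{\ge0}$, $[\![\phi]\!](x)=\sum\mathrm{wt}_\phi(x')$ over assignments $x'$ extending $x$. *)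

(* Defs.v *)
From HB Require Import structures.
From mathcomp Require Import all_boot all_order all_algebra.
Set Implicit Arguments. Unset Strict Implicit. Unset Printing Implicit Defensive.
Import Order.TTheory GRing.Theory Num.Theory.
Local Open Scope ring_scope.

Definition bxor (I : finType) (x y : {ffun I -> bool}) : {ffun I -> bool} :=
  [ffun i => x i (+) y i].

Definition chi (I : finType) (S : {set I}) : {ffun I -> bool} :=
  [ffun i => i \in S].

Definition Match (I : finType) (z : {ffun I -> bool}) : {set {set {set I}}} :=
  [set M : {set {set I}} | partition M [set i | z i] &&
                           [forall S in M, #|S| == 2]].

Definition even_windable (I : finType) (F : {ffun I -> bool} -> rat) : Prop :=
  (forall x, 0 <= F x) /\
  exists B : {ffun I -> bool} -> {ffun I -> bool} -> {set {set I}} -> rat,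
    [/\ (forall x y M, M \in Match (bxor x y) -> 0 <= B x y M),
        (forall x y, F x * F y = \sum_(M in Match (bxor x y)) B x y M) &
        (forall x y M S, M \in Match (bxor x y) -> S \in M ->
           B x y M = B (bxor x (chi S)) (bxor y (chi S)) M)].

(* incidences at vertex v : J_v = {j | vert j = v} *)
Definition Jv (J V : finType) (vert : J -> V) (v : V) : predArgType :=
  {j : J | vert j == v}.

Definition Aext (J : finType) (A : {set J}) : predArgType := {j : J | j \in A}.

Definition restr (J V : finType) (vert : J -> V) (x : {ffun J -> bool}) (v : V)
  : {ffun Jv vert v -> bool} := [ffun j : Jv vert v => x (val j)].

Definition internal_edges (J : finType) (A : {set J}) (E : {set {set J}}) : Prop :=
  partition E (~: A) /\ forall e, e \in E -> #|e| = 2.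

Definition is_assignment (J : finType) (E : {set {set J}}) (x : {ffun J -> bool})
  : bool := [forall e in E, forall i in e, forall j in e, x i == x j].

Definition wt (J V : finType) (vert : J -> V)
  (F : forall v : V, {ffun Jv vert v -> bool} -> rat) (x : {ffun J -> bool}) : rat :=
  \prod_(v : V) F v (restr vert x v).

Definition signature (J V : finType) (vert : J -> V) (A : {set J})
  (E : {set {set J}}) (F : forall v : V, {ffun Jv vert v -> bool} -> rat)
  (xa : {ffun Aext A -> bool}) : rat :=
  \sum_(x : {ffun J -> bool} | is_assignment E x &&
          [forall j : Aext A, x (val j) == xa j]) wt F x.

(* Main.v *)
Require Import Defs.
From HB Require Import structures.
From mathcomp Require Import all_boot all_order all_algebra.
Set Implicit Arguments. Unset Strict Implicit. Unset Printing Implicit Defensive.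
Import Order.TTheory GRing.Theory Num.Theory.
Local Open Scope ring_scope.

Section Pairing.
Variable T : finType.

Definition pairing (M : {set {set T}}) (P : {set T}) : Prop :=
  [/\ forall S, S \in M -> #|S| = 2%N /\ S \subset P,
      forall k, k \in P -> exists2 S, S \in M & k \in S &
      forall S1 S2 k, S1 \in M -> S2 \in M -> k \in S1 -> k \in S2 -> S1 = S2].

Lemma pairingP (M : {set {set T}}) (P : {set T}) :
  (partition M P && [forall S in M, #|S| == 2]) <-> pairing M P.
Proof.
split.
- case/andP=> /and3P[/eqP cov triv s0] /forall_inP h2; split.
  + move=> S SM; split; first exact/eqP/h2.
    by rewrite -cov; apply: (bigcup_sup S SM).
  + by move=> k; rewrite -cov => /bigcupP[S SM kS]; exists S.
  + move=> S1 S2 k S1M S2M k1 k2; apply/eqP; apply: contraTT isT => ne.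
    have := (trivIsetP triv) S1 S2 S1M S2M ne.
    by move/disjointFr => /(_ k k1); rewrite k2.
- case=> h1 h2 h3; apply/andP; split; last first.
    by apply/forall_inP => S /h1 [-> _].
  apply/and3P; split.
  + rewrite eqEsubset; apply/andP; split.
      by apply/bigcupsP => S /h1 [].
    by apply/subsetP => k /h2 [S SM kS]; apply/bigcupP; exists S.
  + apply/trivIsetP => S1 S2 S1M S2M ne; apply/pred0P => k /=.
    apply/negP => /andP[k1 k2]; by move: ne; rewrite (h3 _ _ _ S1M S2M k1 k2) eqxx.
  + by apply/negP => /h1 []; rewrite cards0.
Qed.

Lemma card2_split (S : {set T}) k : #|S| = 2%N -> k \in S ->
  exists a, a != k /\ S = [set k; a].
Proof.
move/eqP/cards2P => [u [v [uv ->]]]; rewrite !inE => /orP[]/eqP->.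
  by exists v; rewrite eq_sym.
by exists u; split => //; rewrite setUC.
Qed.

Definition pb (M : {set {set T}}) (k : T) : {set T} :=
  odflt set0 [pick S in M | k \in S].

Lemma pb_in M P k : pairing M P -> k \in P -> pb M k \in M /\ k \in pb M k.
Proof.
case=> _ h2 _ kP; rewrite /pb; case: pickP => [S /andP[]//|/=].
by case: (h2 k kP) => S SM kS /(_ S); rewrite SM kS.
Qed.

Lemma pb_out M P k : pairing M P -> k \notin P -> pb M k = set0.
Proof.
case=> h1 _ _ kP; rewrite /pb; case: pickP => [S /andP[SM kS]|//] /=.
by case: (h1 S SM) => _ /subsetP/(_ k kS); rewrite (negbTE kP).
Qed.

Lemma pb_eq M P k S : pairing M P -> S \in M -> k \in S -> pb M k = S.
Proof.
move=> hp SM kS; have kP : k \in P by case: hp => /(_ S SM) [_ /subsetP->].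
case: (pb_in hp kP) => pM kp; case: hp => _ _ h3; exact: h3 _ _ _ pM SM kp kS.
Qed.

End Pairing.
Section EWD.
Variable J : finType.
Implicit Types (D : {set J}) (x y z : {ffun J -> bool}).

Definition matchD D z : {set {set {set J}}} :=
  [set M : {set {set J}} | partition M [set k in D | z k] &&
                           [forall S in M, #|S| == 2]].

Lemma matchDP D z M : M \in matchD D z <-> pairing M [set k in D | z k].
Proof. by rewrite inE; apply: pairingP. Qed.

Lemma matchD_dep D z z' : {in D, z =1 z'} -> matchD D z = matchD D z'.
Proof.
move=> e; rewrite /matchD.
have -> : [set k in D | z k] = [set k in D | z' k].
  by apply/setP => k; rewrite !inE; case kD: (k \in D); rewrite // e.
by [].
Qed.

Lemma bxorKK x y (s : {ffun J -> bool}) : bxor (bxor x s) (bxor y s) = bxor x y.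
Proof. by apply/ffunP => k; rewrite !ffunE; case: (x k); case: (y k); case: (s k). Qed.

Definition dep (R : Type) (D : {set J}) (g : {ffun J -> bool} -> R) :=
  forall x x', {in D, x =1 x'} -> g x = g x'.

Definition EWD D (G : {ffun J -> bool} -> rat) : Prop :=
  (forall x, 0 <= G x) /\ dep D G /\
  exists B : {ffun J -> bool} -> {ffun J -> bool} -> {set {set J}} -> rat,
    [/\ forall x y M, M \in matchD D (bxor x y) -> 0 <= B x y M,
        forall x y, G x * G y = \sum_(M in matchD D (bxor x y)) B x y M,
        forall x y M S, M \in matchD D (bxor x y) -> S \in M ->
           B x y M = B (bxor x (chi S)) (bxor y (chi S)) M &
        forall M x x' y y', {in D, x =1 x'} -> {in D, y =1 y'} -> B x y M = B x' y' M].

Lemma EWD_ext D D' G G' : D = D' -> G =1 G' -> EWD D G -> EWD D' G'.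
Proof.
move=> <- eG [h0 [hd [B [b0 b1 b2 b3]]]]; split; first by move=> x; rewrite -eG.
split; first by move=> x x' e; rewrite -!eG; apply: hd.
by exists B; split => // x y; rewrite -!eG.
Qed.

Lemma pairing_sub (M : {set {set J}}) (P S : {set J}) : pairing M P -> S \in M -> S \subset P.
Proof. by case=> /(_ S) h _ _ /h []. Qed.

Lemma pairingU (M1 M2 : {set {set J}}) (P1 P2 : {set J}) : [disjoint P1 & P2] -> pairing M1 P1 -> pairing M2 P2 ->
  pairing (M1 :|: M2) (P1 :|: P2).
Proof.
move=> dis [a1 a2 a3] [c1 c2 c3]; split.
- move=> S; rewrite inE => /orP[/a1|/c1] [-> sub]; split => //;
  apply: subset_trans sub _; [exact: subsetUl | exact: subsetUr].
- move=> k; rewrite inE => /orP[/a2|/c2] [S SM kS]; exists S => //; rewrite inE SM ?orbT //.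
- have cross S1 S2 k : S1 \in M1 -> S2 \in M2 -> k \in S1 -> k \in S2 -> False.
    move=> /a1 [_ /subsetP s1] /c1 [_ /subsetP s2] /s1 k1 /s2 k2.
    by move/disjointFr: dis => /(_ k k1); rewrite k2.
  move=> S1 S2 k; rewrite !inE => /orP[] h1 /orP[] h2 k1 k2.
  + exact: a3 h1 h2 k1 k2.
  + by case: (cross _ _ _ h1 h2 k1 k2).
  + by case: (cross _ _ _ h2 h1 k2 k1).
  + exact: c3 h1 h2 k1 k2.
Qed.

Lemma EWD_mul D1 D2 G1 G2 : [disjoint D1 & D2] -> EWD D1 G1 -> EWD D2 G2 ->
  EWD (D1 :|: D2) (fun x => G1 x * G2 x).
Proof.
move=> dis [p0 [pd [B1 [b10 b11 b12 b13]]]] [q0 [qd [B2 [b20 b21 b22 b23]]]].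
split; first by move=> x; apply: mulr_ge0.
split.
  move=> x x' e; rewrite (pd x x') ?(qd x x') // => k kD; apply: e;
  rewrite inE kD ?orbT //.
pose B x y M := \sum_(M1 in matchD D1 (bxor x y))
   \sum_(M2 in matchD D2 (bxor x y) | M1 :|: M2 == M) B1 x y M1 * B2 x y M2.
have key z M1 M2 : M1 \in matchD D1 z -> M2 \in matchD D2 z -> M1 :|: M2 \in matchD (D1 :|: D2) z.
  move=> /matchDP h1 /matchDP h2; apply/matchDP.
  have -> : [set k in D1 :|: D2 | z k] = [set k in D1 | z k] :|: [set k in D2 | z k].
    by apply/setP => k; rewrite !inE andb_orl.
  apply: pairingU h1 h2; apply/pred0P => k /=; rewrite !inE.
  case k1: (k \in D1) => //=; by rewrite (disjointFr dis k1) /= ?andbF.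
exists B; split.
- move=> x y M _; apply: sumr_ge0 => M1 h1; apply: sumr_ge0 => M2 /andP[h2 _].
  by apply: mulr_ge0; [apply: b10 | apply: b20].
- move=> x y; rewrite mulrACA b11 b21 big_distrlr /=.
  rewrite /B [RHS]exchange_big /=; apply: eq_bigr => M1 h1.
  rewrite (partition_big (fun M2 => M1 :|: M2) (mem (matchD (D1 :|: D2) (bxor x y)))) //=.
  by move=> M2 h2; apply: key.
- move=> x y M S hM SM; rewrite /B bxorKK; apply: eq_bigr => M1 h1.
  apply: eq_bigr => M2 /andP[h2 /eqP eM].
  have: S \in M1 :|: M2 by rewrite eM.
  have dis' k : k \in S -> k \in D1 -> k \in D2 -> False.
    by move=> _ k1 k2; move/disjointFr: dis => /(_ k k1); rewrite k2.
  rewrite inE => /orP[] Sin.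
  + rewrite (b12 _ _ _ _ h1 Sin); congr (_ * _); apply: b23 => k kD; rewrite /bxor /chi !ffunE;
    (case kS: (k \in S); last by rewrite addbF);
    move/matchDP: h1 => /pairing_sub/(_ Sin)/subsetP/(_ k kS); rewrite inE => /andP[kD1 _];
    by case: (dis' k kS kD1 kD).
  + rewrite (b22 _ _ _ _ h2 Sin); congr (_ * _); apply: b13 => k kD; rewrite /bxor /chi !ffunE;
    (case kS: (k \in S); last by rewrite addbF);
    move/matchDP: h2 => /pairing_sub/(_ Sin)/subsetP/(_ k kS); rewrite inE => /andP[kD2 _];
    by case: (dis' k kS kD kD2).
- move=> M x x' y y' ex ey; rewrite /B.
  have exy : {in D1 :|: D2, bxor x y =1 bxor x' y'}.
    by move=> k kD; rewrite !ffunE ex ?ey.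
  have e1 : matchD D1 (bxor x y) = matchD D1 (bxor x' y').
    apply: matchD_dep => k kD; apply: exy; by rewrite inE kD.
  have e2 : matchD D2 (bxor x y) = matchD D2 (bxor x' y').
    apply: matchD_dep => k kD; apply: exy; by rewrite inE kD orbT.
  rewrite e1 e2; apply: eq_bigr => M1 _; apply: eq_bigr => M2 _.
  congr (_ * _); [apply: b13 | apply: b23] => k kD; rewrite (ex, ey) // inE kD ?orbT //.
Qed.
End EWD.
Lemma EWD_one (J : finType) : EWD (set0 : {set J}) (fun _ => 1).
Proof.
have mD z : matchD (set0 : {set J}) z = [set set0].
  apply/setP => M; rewrite in_set1; apply/idP/idP.
  - move/matchDP => [h1 _ _]; apply/eqP/setP => S; rewrite inE; apply/negP => /h1 [c sub].
    have : (#|S| <= #|[set k in (set0 : {set J}) | z k]|)%N by apply: subset_leq_card.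
    by rewrite c (_ : [set k in set0 | z k] = set0) ?cards0 //; apply/setP => k; rewrite !inE.
  - move/eqP->; apply/matchDP; split; first by move=> S; rewrite inE.
    + by move=> k; rewrite !inE.
    + by move=> S1 S2 k; rewrite inE.
split; first by move=> x; rewrite ler01.
split; first by [].
exists (fun _ _ M => if M == set0 then 1 else 0); split.
- by move=> x y M _; case: ifP; rewrite ?ler01.
- by move=> x y; rewrite mD big_set1 eqxx mulr1.
- by move=> x y M S; rewrite mD inE => /eqP ->; rewrite inE.
- by [].
Qed.

Section Transfer.
Variables (I J : finType) (f : I -> J) (finj : injective f) (D : {set J}).
Hypothesis fD : forall i, f i \in D.
Hypothesis Df : forall k, k \in D -> exists i, k = f i.

Definition liftM (M : {set {set I}}) : {set {set J}} := [set f @: S | S : {set I} in M].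
Definition unliftM (M : {set {set J}}) : {set {set I}} := [set f @^-1: S | S : {set J} in M].
Definition comp (z : {ffun J -> bool}) : {ffun I -> bool} := [ffun i => z (f i)].

Lemma preimK (S : {set I}) : f @^-1: (f @: S) = S.
Proof. by apply/setP => i; rewrite inE mem_imset. Qed.

Lemma imK (S : {set J}) : S \subset D -> f @: (f @^-1: S) = S.
Proof.
move=> /subsetP sub; apply/setP => k; apply/imsetP/idP.
  by case=> i; rewrite inE => h ->.
move=> kS; case: (Df (sub k kS)) => i ki; exists i => //; by rewrite inE -ki.
Qed.

Lemma unliftK (M : {set {set I}}) : unliftM (liftM M) = M.
Proof.
apply/setP => S; apply/imsetP/idP.
  by case=> S' /imsetP [S0 S0M ->] ->; rewrite preimK.
by move=> SM; exists (f @: S); [apply: imset_f | rewrite preimK].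
Qed.

Lemma liftK (M : {set {set J}}) : (forall S, S \in M -> S \subset D) -> liftM (unliftM M) = M.
Proof.
move=> h; apply/setP => S; apply/imsetP/idP.
  by case=> S' /imsetP [S0 S0M ->] ->; rewrite imK // h.
by move=> SM; exists (f @^-1: S); [apply: imset_f | rewrite imK // h].
Qed.

Lemma lift_inj : injective liftM.
Proof. exact: can_inj unliftK. Qed.

Lemma lift_pairing (M : {set {set I}}) (z : {ffun J -> bool}) : pairing M [set i | comp z i] -> pairing (liftM M) [set k in D | z k].
Proof.
case=> a1 a2 a3; split.
- move=> S' /imsetP [S SM ->]; case: (a1 S SM) => c /subsetP sub; split.
    by rewrite card_imset.
  apply/subsetP => k /imsetP [i iS ->]; move: (sub i iS); rewrite !inE ffunE fD => ->.
  by [].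
- move=> k; rewrite inE => /andP [kD zk]; case: (Df kD) => i ki.
  have : i \in [set i | comp z i] by rewrite inE ffunE -ki.
  case/a2 => S SM iS; exists (f @: S); first exact: imset_f.
  by rewrite ki imset_f.
- move=> S1' S2' k /imsetP [S1 S1M ->] /imsetP [S2 S2M ->] /imsetP [i1 i1S ->].
  rewrite mem_imset // => i2S; by rewrite (a3 _ _ _ S1M S2M i1S i2S).
Qed.

Lemma lift_pairing_inv (M : {set {set I}}) (z : {ffun J -> bool}) : pairing (liftM M) [set k in D | z k] -> pairing M [set i | comp z i].
Proof.
case=> a1 a2 a3; split.
- move=> S SM; have := a1 (f @: S) (imset_f _ SM); rewrite card_imset // => -[c /subsetP sub].
  split => //; apply/subsetP => i iS; have := sub (f i) (imset_f _ iS).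
  by rewrite !inE ffunE => /andP [].
- move=> i; rewrite inE ffunE => zi.
  have : f i \in [set k in D | z k] by rewrite inE fD.
  case/a2 => S' /imsetP [S SM ->]; rewrite mem_imset // => iS; by exists S.
- move=> S1 S2 i S1M S2M i1 i2.
  apply: (imset_inj finj); apply: (a3 _ _ (f i)); rewrite ?imset_f //.
Qed.

Lemma Match_lift (z : {ffun J -> bool}) : liftM @: Match (comp z) = matchD D z.
Proof.
apply/setP => M'; apply/imsetP/idP.
  case=> M; rewrite inE => /pairingP h ->; apply/matchDP; exact: lift_pairing.
move=> /matchDP h; have sub : forall S, S \in M' -> S \subset D.
  move=> S SM; apply: subset_trans (pairing_sub h SM) _.
  by apply/subsetP => k; rewrite inE => /andP[].
exists (unliftM M'); last by rewrite liftK.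
rewrite inE; apply/pairingP; apply: lift_pairing_inv; by rewrite liftK.
Qed.

Lemma sum_lift (z : {ffun J -> bool}) (g : {set {set J}} -> rat) :
  \sum_(M in Match (comp z)) g (liftM M) = \sum_(M' in matchD D z) g M'.
Proof.
rewrite -Match_lift big_imset //; move=> M1 M2 _ _; exact: lift_inj.
Qed.

Lemma comp_bxor (x y : {ffun J -> bool}) : comp (bxor x y) = bxor (comp x) (comp y).
Proof. by apply/ffunP => i; rewrite !ffunE. Qed.

Lemma lift_EW (F : {ffun I -> bool} -> rat) : even_windable F -> EWD D (fun x => F (comp x)).
Proof.
case=> F0 [B [b0 b1 b2]].
have inv z M' : M' \in matchD D z -> unliftM M' \in Match (comp z) /\ liftM (unliftM M') = M'.
  rewrite -Match_lift => /imsetP [M0 M0in ->]; by rewrite unliftK.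
split; first by [].
split.
  move=> x x' e; congr F; apply/ffunP => i; by rewrite !ffunE e.
exists (fun x y M' => B (comp x) (comp y) (unliftM M')); split.
- move=> x y M' /inv [] h _; move: h; rewrite (comp_bxor x y) => h; exact: b0.
- move=> x y; rewrite b1 -(comp_bxor x y) -sum_lift; apply: eq_bigr => M _.
  by rewrite unliftK.
- move=> x y M' S' hM' S'M; case: (inv _ _ hM'); rewrite comp_bxor => h eM.
  move: S'M; rewrite -{1}eM => /imsetP [S0 S0M ->].
  have e w : comp (bxor w (chi (f @: S0))) = bxor (comp w) (chi S0).
    by apply/ffunP => i; rewrite !ffunE mem_imset.
  rewrite !e; exact: b2 h S0M.
- move=> M x x' y y' ex ey; congr B; apply/ffunP => i; rewrite !ffunE ?ex ?ey //.
Qed.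

Lemma lower_EW (G : {ffun J -> bool} -> rat) (ext : {ffun I -> bool} -> {ffun J -> bool}) :
  (forall xa, comp (ext xa) = xa) -> EWD D G -> even_windable (fun xa => G (ext xa)).
Proof.
move=> extK [G0 [Gd [B [b0 b1 b2 b3]]]].
have inM xa ya M : M \in Match (bxor xa ya) -> liftM M \in matchD D (bxor (ext xa) (ext ya)).
  by move=> h; rewrite -Match_lift comp_bxor !extK imset_f.
split; first by [].
exists (fun xa ya M => B (ext xa) (ext ya) (liftM M)); split.
- move=> xa ya M /inM; exact: b0.
- move=> xa ya; rewrite b1 -sum_lift comp_bxor !extK //.
- move=> xa ya M S hM SM.
  rewrite (b2 _ _ _ (f @: S) (inM _ _ _ hM)); last exact: imset_f.
  have e w : {in D, bxor (ext w) (chi (f @: S)) =1 ext (bxor w (chi S))}.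
    move=> k /Df [i ->]; rewrite !ffunE mem_imset //.
    by rewrite -[ext w (f i)](ffunE (fun i => ext w (f i))) -[ext _ (f i)](ffunE (fun i => ext _ (f i))) -/(comp _) -/(comp _) !extK !ffunE.
  by apply: b3; apply: e.
Qed.

End Transfer.
Section SumOut.
Variables (J : finType) (i j : J).
Hypothesis hij : i != j.

Definition upd (x : {ffun J -> bool}) (b : bool) : {ffun J -> bool} :=
  [ffun k => if (k == i) || (k == j) then b else x k].

Definition piM (M : {set {set J}}) : {set {set J}} :=
  if pb M i == pb M j then M :\ pb M i
  else (M :\ pb M i :\ pb M j) :|: [set (pb M i :|: pb M j) :\ i :\ j].

Lemma pi_pairing (M : {set {set J}}) (P : {set J}) :
  pairing M P -> (i \in P) = (j \in P) -> pairing (piM M) (P :\ i :\ j).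
Proof.
move=> hp eP; have [a1 a2 a3] := hp.
have notin S k : S \in M -> k \in S -> S != pb M k -> False.
  by move=> SM kS; rewrite (pb_eq hp SM kS) eqxx.
rewrite /piM; case: eqP => [eSS|nSS].
- split.
  + move=> S; rewrite !inE => /andP [nS SM]; case: (a1 S SM) => c /subsetP sub; split => //.
    apply/subsetP => k kS; rewrite !inE (sub k kS) andbT.
    apply/andP; split; apply/eqP => ek; subst k; apply: (notin S _ SM kS); by rewrite -?eSS.
  + move=> k; rewrite !inE => /andP [nkj /andP [nki kP]].
    case: (a2 k kP) => S SM kS; exists S => //; rewrite !inE SM andbT.
    apply/eqP => eS; subst S.
    have iP : i \in P.
      apply: contraTT isT => iP; by rewrite (pb_out hp iP) inE in kS.
    have [pi ii] := pb_in hp iP.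
    have jP : j \in P by rewrite -eP.
    have [_ jj] := pb_in hp jP; rewrite -eSS in jj.
    case: (card2_split (proj1 (a1 _ pi)) ii) => a [na ea].
    move: jj kS; rewrite ea !inE eq_sym (negbTE hij) /= => /eqP <-.
    by rewrite (negbTE nkj) (negbTE nki) => /orP [].
  + move=> S1 S2 k; rewrite !inE => /andP [_ h1] /andP [_ h2]; exact: a3.
- have iP : i \in P.
    apply: contraTT isT => iP; have jP : j \notin P by rewrite -eP.
    by case: nSS; rewrite (pb_out hp iP) (pb_out hp jP).
  have jP : j \in P by rewrite -eP.
  have [pi ii] := pb_in hp iP; have [pj jj] := pb_in hp jP.
  have jni : j \notin pb M i.
    apply/negP => h; apply: nSS; by rewrite (pb_eq hp pi h).
  have inj : i \notin pb M j.
    apply/negP => h; apply: nSS; by rewrite (pb_eq hp pj h).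
  have disj k : k \in pb M i -> k \in pb M j -> False.
    by move=> h1 h2; apply: nSS; apply: (a3 _ _ k).
  have inT k : (k \in (pb M i :|: pb M j) :\ i :\ j) =
               [&& k != j, k != i & (k \in pb M i) || (k \in pb M j)].
    by rewrite !inE.
  split.
  + move=> S; rewrite !inE => /orP [/and3P [nSj nSi SM] | /eqP ->].
      case: (a1 S SM) => c /subsetP sub; split => //.
      apply/subsetP => k kS; rewrite !inE (sub k kS) andbT.
      apply/andP; split; apply/eqP => ek; subst k; apply: (notin S _ SM kS) => //.
    split.
      have c4 : #|pb M i :|: pb M j| = 4%N.
        rewrite cardsU (proj1 (a1 _ pi)) (proj1 (a1 _ pj)).
        suff -> : pb M i :&: pb M j = set0 by rewrite cards0.
        apply/setP => k; rewrite !inE; apply/negP => /andP [h1 h2]; exact: disj h1 h2.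
      move: c4; rewrite (cardsD1 i) (cardsD1 j (_ :\ i)) !inE ii jj eq_sym hij orbT /=.
      by move=> [].
    apply/subsetP => k; rewrite inT !inE => /and3P [-> -> /orP [] h] /=.
      by move/subsetP: (proj2 (a1 _ pi)) => /(_ k h).
    by move/subsetP: (proj2 (a1 _ pj)) => /(_ k h).
  + move=> k; rewrite !inE => /andP [nkj /andP [nki kP]].
    case: (a2 k kP) => S SM kS.
    case: (S =P pb M i) => [eS|nSi].
      exists ((pb M i :|: pb M j) :\ i :\ j); first by rewrite !inE eqxx orbT.
      by rewrite inT nkj nki -eS kS.
    case: (S =P pb M j) => [eS|nSj].
      exists ((pb M i :|: pb M j) :\ i :\ j); first by rewrite !inE eqxx orbT.
      by rewrite inT nkj nki -eS kS orbT.
    exists S => //; rewrite !inE SM andbT; apply/orP; left; apply/andP; split; exact/eqP.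
  + have mix S k : S \in M -> S != pb M i -> S != pb M j ->
        k \in (pb M i :|: pb M j) :\ i :\ j -> k \in S -> False.
      move=> SM nSi nSj; rewrite inT => /and3P [_ _ /orP [] h] kS.
        by move: nSi; rewrite (a3 _ _ _ SM pi kS h) eqxx.
      by move: nSj; rewrite (a3 _ _ _ SM pj kS h) eqxx.
    move=> S1 S2 k; rewrite !inE => /orP [/and3P [n1j n1i S1M] | /eqP ->]
                                   /orP [/and3P [n2j n2i S2M] | /eqP ->] k1 k2.
    * exact: a3 S1M S2M k1 k2.
    * by case: (mix _ _ S1M n1i n1j k2 k1).
    * by case: (mix _ _ S2M n2i n2j k1 k2).
    * by [].
Qed.


Lemma pi_split (M : {set {set J}}) (P : {set J}) :
  pairing M P -> (i \in P) = (j \in P) -> pb M i != pb M j ->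
  [/\ pb M i \in M, i \in pb M i, pb M j \in M & j \in pb M j] /\
  [/\ j \notin pb M i, i \notin pb M j & forall k, k \in pb M i -> k \in pb M j -> False].
Proof.
move=> hp eP /eqP nSS; have [a1 a2 a3] := hp.
have iP : i \in P.
  apply: contraTT isT => iP; have jP : j \notin P by rewrite -eP.
  by case: nSS; rewrite (pb_out hp iP) (pb_out hp jP).
have jP : j \in P by rewrite -eP.
have [pi ii] := pb_in hp iP; have [pj jj] := pb_in hp jP.
split => //; split.
- apply/negP => h; apply: nSS; by rewrite (pb_eq hp pi h).
- apply/negP => h; apply: nSS; by rewrite (pb_eq hp pj h).
- by move=> k h1 h2; apply: nSS; apply: (a3 _ _ k).
Qed.

Lemma updKK (x y s : {ffun J -> bool}) (b c : bool) : bxor (upd (bxor x s) b) (upd (bxor y s) c) = bxor (upd x b) (upd y c).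
Proof.
apply/ffunP => k; rewrite /bxor /upd !ffunE; case: ifP => // _.
by case: (x k); case: (y k); case: (s k).
Qed.

Lemma updNN (x y : {ffun J -> bool}) (b c : bool) : bxor (upd x (~~ b)) (upd y (~~ c)) = bxor (upd x b) (upd y c).
Proof.
apply/ffunP => k; rewrite /bxor /upd !ffunE; case: ifP => // _.
by case: b; case: c.
Qed.

Lemma upd_chi (x : {ffun J -> bool}) (b : bool) (S : {set J}) : i \notin S -> j \notin S ->
  bxor (upd x b) (chi S) = upd (bxor x (chi S)) b.
Proof.
move=> iS jS; apply/ffunP => k; rewrite /bxor /upd /chi !ffunE.
case: (k =P i) => [->|_]; first by rewrite (negbTE iS) addbF.
case: (k =P j) => [->|_]; first by rewrite (negbTE jS) addbF.
by [].
Qed.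

Lemma pi_match (D : {set J}) (x y : {ffun J -> bool}) (b c : bool) (M : {set {set J}}) : i \in D -> j \in D ->
  M \in matchD D (bxor (upd x b) (upd y c)) -> piM M \in matchD (D :\ i :\ j) (bxor x y).
Proof.
move=> iD jD /matchDP hp; apply/matchDP.
have -> : [set k in D :\ i :\ j | bxor x y k] =
          [set k in D | bxor (upd x b) (upd y c) k] :\ i :\ j.
  apply/setP => k; rewrite !inE /bxor /upd !ffunE.
  by case: (k =P j) => //= _; case: (k =P i).
apply: pi_pairing hp _.
by rewrite !inE iD jD /bxor /upd !ffunE !eqxx /= orbT.
Qed.

Lemma EWD_sum (D : {set J}) G : i \in D -> j \in D -> EWD D G ->
  EWD (D :\ i :\ j) (fun x => \sum_(b : bool) G (upd x b)).
Proof.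
move=> iD jD [G0 [Gd [B [b0 b1 b2 b3]]]].
have updD (x x' : {ffun J -> bool}) (b : bool) : {in D :\ i :\ j, x =1 x'} -> {in D, upd x b =1 upd x' b}.
  move=> e k kD; rewrite !ffunE; case: ifP => // /norP [ki kj]; apply: e; by rewrite !inE ki kj kD.
split; first by move=> x; apply: sumr_ge0 => b _; apply: G0.
split.
  by move=> x x' e; apply: eq_bigr => b _; apply: Gd; apply: updD.
pose inner x y M := \sum_(b : bool) \sum_(c : bool | M \in matchD D (bxor (upd x b) (upd y c)))
   B (upd x b) (upd y c) M.
exists (fun x y M' => \sum_(M | piM M == M') inner x y M); split.
- move=> x y M' _; apply: sumr_ge0 => M _; apply: sumr_ge0 => b _; apply: sumr_ge0 => c hc.
  exact: b0.
- move=> x y; rewrite big_distrlr /=.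
  transitivity (\sum_(b : bool) \sum_(c : bool)
      \sum_(M in matchD D (bxor (upd x b) (upd y c))) B (upd x b) (upd y c) M).
    by apply: eq_bigr => b _; apply: eq_bigr => c _; exact: b1.
  transitivity (\sum_(b : bool) \sum_(c : bool) \sum_(M' in matchD (D :\ i :\ j) (bxor x y))
      \sum_(M in matchD D (bxor (upd x b) (upd y c)) | piM M == M') B (upd x b) (upd y c) M).
    apply: eq_bigr => b _; apply: eq_bigr => c _; apply: partition_big => M hM.
    exact: pi_match hM.
  transitivity (\sum_(b : bool) \sum_(M' in matchD (D :\ i :\ j) (bxor x y)) \sum_(c : bool)
      \sum_(M in matchD D (bxor (upd x b) (upd y c)) | piM M == M') B (upd x b) (upd y c) M).
    by apply: eq_bigr => b _; rewrite exchange_big.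
  rewrite exchange_big; apply: eq_bigr => M' _.
  rewrite /inner [RHS]exchange_big; apply: eq_bigr => b _.
  rewrite (exchange_big_dep (fun M => piM M == M')) /=; last by move=> c M _ /andP [].
  apply: eq_bigr => M hM; apply: eq_bigl => c; by rewrite hM andbT.
- move=> x y M' S hM' SM'; apply: eq_bigr => M /eqP piMe.
  have [iS jS] : i \notin S /\ j \notin S.
    move/matchDP: hM' => hpM; have /subsetP sub := pairing_sub hpM SM'.
    by split; apply/negP => /sub; rewrite !inE eqxx ?andbF.
  have E (F : bool -> bool -> rat) :
     \sum_(b : bool) \sum_(c : bool | M \in matchD D (bxor (upd (bxor x (chi S)) b) (upd (bxor y (chi S)) c))) F b c
   = \sum_(b : bool) \sum_(c : bool | M \in matchD D (bxor (upd x b) (upd y c))) F b c.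
    by apply: eq_bigr => b _; apply: eq_bigl => c; rewrite updKK.
  rewrite /inner E; case: (boolP (S \in M)) => SM.
    apply: eq_bigr => b _; apply: eq_bigr => c hc.
    by rewrite (b2 _ _ _ _ hc SM) !upd_chi.
  rewrite [RHS](reindex_inj (inv_inj negbK)) /=; apply: eq_bigr => b _.
  rewrite [RHS](reindex_inj (inv_inj negbK)) /=.
  apply: eq_big => [c|c hc]; first by rewrite updNN.
  have hp := hc; move/matchDP: hp => hp.
  have eP : (i \in [set k in D | bxor (upd x b) (upd y c) k]) =
            (j \in [set k in D | bxor (upd x b) (upd y c) k]).
    by rewrite !inE iD jD /bxor /upd !ffunE !eqxx /= orbT.
  move: SM'; rewrite -piMe /piM; case: eqP => [eSS | /eqP nSS].
    by rewrite !inE => /andP [_ SM2]; rewrite SM2 in SM.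
  rewrite !inE => /orP [/and3P [_ _ SM2] | /eqP eS]; first by rewrite SM2 in SM.
  have [[pi ii pj jj] [jni inj disj]] := pi_split hp eP nSS.
  rewrite (b2 _ _ _ _ hc pi).
  have hc2 : M \in matchD D (bxor (bxor (upd x b) (chi (pb M i))) (bxor (upd y c) (chi (pb M i)))).
    by rewrite bxorKK.
  rewrite (b2 _ _ _ _ hc2 pj) eS.
  have pw w bb : bxor (bxor (upd w bb) (chi (pb M i))) (chi (pb M j)) =
                 upd (bxor w (chi ((pb M i :|: pb M j) :\ i :\ j))) (~~ bb).
    apply/ffunP => k; rewrite /bxor /upd /chi !ffunE !inE.
    case: (k =P i) => [->|/eqP ki]; first by rewrite ?eqxx ii (negbTE inj) /=; case: bb.
    case: (k =P j) => [->|/eqP kj]; first by rewrite ?eqxx (negbTE jni) jj orbT /=; case: bb.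
    rewrite /=; case: (boolP (k \in pb M i)) => h1.
      by case: (boolP (k \in pb M j)) => h2; [case: (disj k h1 h2) | rewrite /= addbF].
    by rewrite addbF.
  by rewrite !pw.
- move=> M' x x' y y' ex ey; apply: eq_bigr => M _; rewrite /inner.
  apply: eq_bigr => b _; apply: eq_big => [c|c _].
    rewrite (@matchD_dep _ D (bxor (upd x b) (upd y c)) (bxor (upd x' b) (upd y' c))) //.
    move=> k kD; have e1 := updD _ _ b ex k kD; have e2 := updD _ _ c ey k kD.
    by rewrite /bxor !ffunE; rewrite !ffunE in e1 e2; rewrite e1 e2.
  by apply: b3; apply: updD.
Qed.

End SumOut.
Lemma EW_ext (I : finType) (F F' : {ffun I -> bool} -> rat) :
  F =1 F' -> even_windable F -> even_windable F'.
Proof.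
move=> e [h0 [B [b0 b1 b2]]]; split; first by move=> x; rewrite -e.
by exists B; split => // x y; rewrite -!e.
Qed.

Section Main.
Variables (J V : finType) (vert : J -> V) (A : {set J}) (E : {set {set J}}).
Unset Implicit Arguments.
Variable (F : forall v : V, {ffun Jv vert v -> bool} -> rat).
Set Implicit Arguments.
Hypothesis hE : internal_edges A E.
Hypothesis hF : forall v : V, even_windable (F v).

Lemma vert_EWD v : EWD [set j | vert j == v] (fun x => F v (restr vert x v)).
Proof.
have h := @lift_EW (Jv vert v) J val val_inj [set j | vert j == v].
apply: EWD_ext (h _ _ _ (hF v)) => //.
- by move=> a; rewrite inE (valP a).
- by move=> k; rewrite inE => kv; exists (Sub k kv).
Qed.

Lemma prod_EWD (s : seq V) : uniq s ->
  EWD [set j | vert j \in s] (fun x => \prod_(v <- s) F v (restr vert x v)).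
Proof.
elim: s => [_|v s IH] /=.
  apply: EWD_ext (@EWD_one J) => [|x]; last by rewrite big_nil.
  by apply/setP => k; rewrite !inE.
case/andP => vs us.
have := EWD_mul _ (vert_EWD v) (IH us).
have dis : [disjoint [set j | vert j == v] & [set j | vert j \in s]].
  apply/pred0P => k /=; rewrite !inE; apply/negP => /andP [/eqP -> ks].
  by rewrite ks in vs.
move=> /(_ dis); apply: EWD_ext => [|x]; last by rewrite big_cons.
by apply/setP => k; rewrite !inE.
Qed.

Definition W (x : {ffun J -> bool}) : rat := \prod_(v : V) F v (restr vert x v).

Lemma W_EWD : EWD setT W.
Proof.
apply: EWD_ext (prod_EWD (index_enum_uniq V)) => //.
by apply/setP => k; rewrite !inE mem_index_enum.
Qed.

Definition cons_e (z : {ffun J -> bool}) (e : {set J}) : bool :=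
  [forall i in e, forall j in e, z i == z j].

Definition H (s : seq {set J}) (x : {ffun J -> bool}) : rat :=
  \sum_(z : {ffun J -> bool} | all (cons_e z) s &&
        [forall k, (k \notin \bigcup_(e <- s) e) ==> (z k == x k)]) W z.

Lemma cons_cond (i j : J) (z x : {ffun J -> bool}) (cs : {set J}) (b : bool) :
  i \notin cs -> j \notin cs -> i != j ->
  (cons_e z [set i; j] && [forall k, (k \notin [set i; j] :|: cs) ==> (z k == x k)]
    && (z i == b))
  = [forall k, (k \notin cs) ==> (z k == upd i j x b k)].
Proof.
move=> ics jcs ij; apply/idP/idP.
- case/andP => [/andP [ce fo] /eqP zb]; apply/forallP => k; apply/implyP => kcs.
  rewrite ffunE; case: (k =P i) => [->|/eqP ki] /=; first by rewrite zb.
  case: (k =P j) => [->|/eqP kj] /=.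
    by move/forall_inP: ce => /(_ j); rewrite !inE eqxx orbT => /(_ isT) /forall_inP /(_ i);
       rewrite !inE eqxx => /(_ isT) /eqP ->; rewrite zb.
  by move/forallP: fo => /(_ k); rewrite !inE (negbTE ki) (negbTE kj) (negbTE kcs).
- move/forallP => h.
  have zi : z i = b by move: (h i); rewrite ics ffunE eqxx => /eqP.
  have zj : z j = b by move: (h j); rewrite jcs ffunE eqxx orbT => /eqP.
  rewrite zi eqxx andbT; apply/andP; split.
    apply/forall_inP => u; rewrite !inE => /orP [] /eqP ->;
    apply/forall_inP => w; rewrite !inE => /orP [] /eqP ->; by rewrite ?zi ?zj.
  apply/forallP => k; apply/implyP; rewrite !inE negb_or => /andP [/norP [ki kj] kcs].
  by move: (h k); rewrite kcs ffunE (negbTE ki) (negbTE kj).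
Qed.

Lemma mem_cover (s : seq {set J}) k : reflect (exists2 e, e \in s & k \in e) (k \in \bigcup_(e <- s) e).
Proof. by rewrite bigcup_seq; apply: (iffP bigcupP) => [[e es ke]|[e es ke]]; exists e. Qed.

Lemma edge_EWD (s : seq {set J}) : uniq s -> {subset s <= E} ->
  EWD (~: \bigcup_(e <- s) e) (H s).
Proof.
case: hE => /and3P [_ triv _] c2.
elim: s => [_ _|e s IH] /=.
  apply: EWD_ext W_EWD; first by rewrite big_nil setC0.
  move=> x; rewrite /H /= (big_pred1 x) // => z /=.
  rewrite big_nil; apply/forallP/eqP => [h|->]; last by move=> k; rewrite eqxx implybT.
  by apply/ffunP => k; move: (h k); rewrite inE /= => /eqP.
case/andP => es us sub.
have eE : e \in E by apply: sub; rewrite inE eqxx.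
have subs : {subset s <= E} by move=> e' h; apply: sub; rewrite inE h orbT.
have := c2 e eE => /eqP /cards2P [i [j [ij ee]]].
have notcs k : k \in e -> k \notin \bigcup_(e' <- s) e'.
  move=> ke; apply/negP => /mem_cover [e' e's ke'].
  have ne : e != e' by apply: contraNneq es => ->.
  have := (trivIsetP triv) e e' eE (subs _ e's) ne.
  by move/disjointFr => /(_ k ke); rewrite ke'.
have ics : i \notin \bigcup_(e' <- s) e' by apply: notcs; rewrite ee !inE eqxx.
have jcs : j \notin \bigcup_(e' <- s) e' by apply: notcs; rewrite ee !inE eqxx orbT.
have iD : i \in ~: \bigcup_(e' <- s) e' by rewrite inE.
have jD : j \in ~: \bigcup_(e' <- s) e' by rewrite inE.
have := EWD_sum ij iD jD (IH us subs).
apply: EWD_ext.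
  apply/setP => k; rewrite big_cons ee !inE negb_or.
  by case: (k =P i); case: (k =P j).
move=> x; rewrite /H (partition_big (fun z : {ffun J -> bool} => z i) xpredT) //=.
apply: eq_bigr => b _; apply: eq_bigl => z; rewrite big_cons ee.
rewrite -(@cons_cond i j z x _ b ics jcs ij) -!andbA; exact: andbCA.
Qed.

Definition extA (xa : {ffun Aext A -> bool}) : {ffun J -> bool} :=
  [ffun k => if insub k is Some a then xa a else false].

Lemma extA_val xa (a : Aext A) : extA xa (val a) = xa a.
Proof. by rewrite ffunE valK. Qed.

Lemma cover_enum : \bigcup_(e <- enum E) e = ~: A.
Proof.
case: hE => /and3P [/eqP cov _ _] _; rewrite -cov bigcup_seq.
by apply/setP => k; apply/bigcupP/bigcupP => [[e ]|[e]]; rewrite ?mem_enum => h1 h2; exists e; rewrite ?mem_enum.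
Qed.

Lemma sig_eq (xa : {ffun Aext A -> bool}) : @signature J V vert A E F xa = H (enum E) (extA xa).
Proof.
apply: eq_bigl => z; rewrite cover_enum; congr andb.
  rewrite /is_assignment; apply/forall_inP/allP => h e.
    by rewrite mem_enum => he; exact: (h e he).
  by move=> he; apply: h; rewrite mem_enum.
apply/forallP/forallP => h k.
  rewrite inE negbK; apply/implyP => kA.
  have := extA_val xa (Sub k kA); rewrite SubK => ->.
  by move: (h (Sub k kA)); rewrite SubK.
by move: (h (val k)); rewrite inE negbK (valP k) extA_val.
Qed.

End Main.

Theorem lemma7 (J V : finType) (vert : J -> V) (A : {set J})
  (E : {set {set J}}) (F : forall v : V, {ffun Jv vert v -> bool} -> rat) :
  internal_edges A E ->
  (forall v : V, even_windable (F v)) ->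
  even_windable (@signature J V vert A E F).
Proof.
move=> hE hF.
have h1 : EWD A (H F (enum E)).
  apply: EWD_ext (edge_EWD hE hF (enum_uniq _) _) => //.
    by rewrite (cover_enum hE) setCK.
  by move=> e; rewrite mem_enum.
have Df : forall k, k \in A -> exists i : Aext A, k = val i.
  by move=> k kA; exists (Sub k kA).
have extK : forall xa : {ffun Aext A -> bool}, comp (val : Aext A -> J) (extA xa) = xa.
  by move=> xa; apply/ffunP => a; rewrite ffunE extA_val.
have := @lower_EW (Aext A) J val val_inj A (fun a => valP a) Df _ (@extA J A) extK h1.
apply: EW_ext => xa; by rewrite (sig_eq F hE).
Qed.
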